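(* Let $(\alpha,\beta)$ be an admissible, non-null pair. If there is no $x\in(0,1)$ with $\pi_x(\alpha)=\pi_x(\beta)$, then for every $x\in(0,1)$ the map $\pi_x:\Omega_{(\alpha,\beta)}\to[0,1]$ is strictly increasing (with respect to the lexicographic order on $\Omega_{(\alpha,\beta)}$).
   Context: $\Omega=\{0,1\}^{\infty}$ is the set of infinite binary strings $\omega=\omega_0\omega_1\cdots$; $S$ is the left shift $S(\omega_0\omega_1\cdots)=\omega_1\omega_2\cdots$; $\preceq$ is the lexicographic order ($\sigma\prec\omega$ iff $\sigma\ne\omega$ and $\sigma_k<\omega_k$ at the first index $k$ where they differ), with intervals $[\alpha,\beta]=\{\omega:\alpha\preceq\omega\preceq\beta\}$ and half-open analogues. A pair $(\alpha,\beta)$ is admissible if $\alpha_0=0,\alpha_1=1,\beta_0=1,\beta_1=0$ and $S^n\alpha\notin(\alpha,\beta]$, $S^n\beta\notin[\alpha,\beta)$ for all $n\ge0$. $\Omega_{(\alpha,\beta,-)}=\{\omega:S^n\omega\notin(\alpha,\beta]\ \forall n\ge0\}$, $\Omega_{(\alpha,\beta,+)}=\{\omega:S^n\omega\notin[\alpha,\beta)\ \forall n\ge0\}$, $\Omega_{(\alpha,\beta)}=\Omega_{(\alpha,\beta,-)}\cup\Omega_{(\alpha,\beta,+)}$. For $\Gamma\subseteq\Omega$, $\Gamma_n=\{\omega_0\cdots\omega_n:\omega\in\Gamma\}$, $h(\Gamma)=\limsup_n\frac1n\ln|\Gamma_n|$; the admissible pair is non-null if $h(\Omega_{(\alpha,\beta)})>0$.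 For $x\in[0,1)$, the projection map is $\pi_x(\omega)=(1-x)\sum_{k=0}^\infty\omega_kx^k$. *)

(* Defs.v *)
From Stdlib Require Import Reals Lra List Arith ClassicalEpsilon.
From Coquelicot Require Import Coquelicot.
Import ListNotations.
Open Scope R_scope.

Definition word := nat -> bool.

Definition shiftn (n : nat) (w : word) : word := fun k => w (n + k)%nat.

Definition weq (s w : word) : Prop := forall k, s k = w k.

Definition lex_lt (s w : word) : Prop :=
  exists k, (forall i, (i < k)%nat -> s i = w i) /\ s k = false /\ w k = true.
Definition lex_le (s w : word) : Prop := weq s w \/ lex_lt s w.

Definition in_oc (a b w : word) : Prop := lex_lt a w /\ lex_le w b.
Definition in_co (a b w : word) : Prop := lex_le a w /\ lex_lt w b.

Definition admissible (a b : word) : Prop :=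
  a 0%nat = false /\ a 1%nat = true /\ b 0%nat = true /\ b 1%nat = false /\
  (forall n, ~ in_oc a b (shiftn n a)) /\ (forall n, ~ in_co a b (shiftn n b)).

Definition Omega_minus (a b : word) (w : word) : Prop :=
  forall n, ~ in_oc a b (shiftn n w).
Definition Omega_plus (a b : word) (w : word) : Prop :=
  forall n, ~ in_co a b (shiftn n w).
Definition Omega_ab (a b : word) (w : word) : Prop :=
  Omega_minus a b w \/ Omega_plus a b w.

Fixpoint all_words (k : nat) : list (list bool) :=
  match k with
  | O => [[]]
  | S k' => map (cons false) (all_words k') ++ map (cons true) (all_words k')
  end.

Definition prefix_of (Gamma : word -> Prop) (n : nat) (u : list bool) : Prop :=
  exists w, Gamma w /\ u = map w (seq 0 (S n)).

Definition card_prefixes (Gamma : word -> Prop) (n : nat) : nat :=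
  length (filter (fun u => if excluded_middle_informative (prefix_of Gamma n u)
                           then true else false) (all_words (S n))).

Definition entropy (Gamma : word -> Prop) : Rbar :=
  LimSup_seq (fun n => ln (INR (card_prefixes Gamma n)) / INR n).

Definition non_null (a b : word) : Prop :=
  Rbar_lt (Finite 0) (entropy (Omega_ab a b)).

Definition proj (x : R) (w : word) : R :=
  (1 - x) * Series (fun k => if w k then x ^ k else 0).

(* Main.v *)
Require Import Defs.
From Stdlib Require Import Reals Lra Lia ZArith FunctionalExtensionality Classical.
From Coquelicot Require Import Coquelicot.
Open Scope R_scope.

Definition tm (x : R) (u : word) (k : nat) : R := if u k then x ^ k else 0.
Definition yv (x : R) (u : word) : R := Series (tm x u).

Lemma ex_tm x u : 0 <= x < 1 -> ex_series (tm x u).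
Proof.
  intros Hx. apply (@ex_series_le R_AbsRing R_CompleteNormedModule _ (fun n => x ^ n)).
  - intros n. unfold norm; simpl. unfold abs; simpl. unfold tm.
    destruct (u n); rewrite ?Rabs_R0; [rewrite Rabs_pos_eq; [lra|apply pow_le; lra] | apply pow_le; lra].
  - exists (/ (1 - x)). apply is_series_geom. rewrite Rabs_pos_eq; lra.
Qed.

Lemma yv_bounds x u : 0 <= x < 1 -> 0 <= yv x u <= / (1 - x).
Proof.
  intros Hx. split.
  - unfold yv. assert (Z : Series (fun _ : nat => 0) = 0).
    { rewrite (Series_ext _ (fun n : nat => 0 * 0)) by (intros; ring). rewrite Series_scal_l. ring. }
    rewrite <- Z.
    apply Series_le. intros n; unfold tm; destruct (u n); split; try lra; apply pow_le; lra.
    apply ex_tm; auto.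
  - unfold yv. rewrite <- (is_series_unique _ _ (is_series_geom x ltac:(rewrite Rabs_pos_eq; lra))).
    apply Series_le. intros n; unfold tm; destruct (u n); split; try lra; try apply pow_le; lra.
    exists (/ (1 - x)). apply is_series_geom. rewrite Rabs_pos_eq; lra.
Qed.

Lemma yv_step x u : 0 <= x < 1 ->
  yv x u = (if u 0%nat then 1 else 0) + x * yv x (shiftn 1 u).
Proof.
  intros Hx. unfold yv. rewrite Series_incr_1 by (apply ex_tm; auto).
  rewrite <- Series_scal_l. f_equal; try (unfold tm; destruct (u 0%nat); simpl; lra).
  apply Series_ext; intros n. unfold tm, shiftn. simpl. destruct (u (S n)); simpl; ring.
Qed.

Lemma yv_prefix x k : 0 <= x < 1 -> forall u v, (forall i, (i < k)%nat -> u i = v i) ->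
  yv x u - yv x v = x ^ k * (yv x (shiftn k u) - yv x (shiftn k v)).
Proof.
  intros Hx. induction k as [|k IH]; intros u v H.
  - simpl. unfold yv, shiftn. rewrite (Series_ext (tm x (fun k => u (0+k)%nat)) (tm x u)) by reflexivity.
    rewrite (Series_ext (tm x (fun k => v (0+k)%nat)) (tm x v)) by reflexivity. ring.
  - rewrite (yv_step x u), (yv_step x v) by auto.
    rewrite (H 0%nat) by lia.
    assert (E := IH (shiftn 1 u) (shiftn 1 v) ltac:(intros i Hi; unfold shiftn; apply H; lia)).
    replace (yv x (shiftn (S k) u)) with (yv x (shiftn k (shiftn 1 u))) by reflexivity.
    replace (yv x (shiftn (S k) v)) with (yv x (shiftn k (shiftn 1 v))) by reflexivity.
    simpl. nra.
Qed.

Lemma pow_lip x x' r k : 0 <= x <= r -> 0 <= x' <= r ->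
  Rabs (x ^ (S k) - x' ^ (S k)) <= INR (S k) * r ^ k * Rabs (x - x').
Proof.
  intros Hx Hx'. induction k as [|k IH].
  - simpl. replace (x * 1 - x' * 1) with (x - x') by ring. lra.
  - replace (x ^ S (S k) - x' ^ S (S k)) with (x * (x ^ S k - x' ^ S k) + x' ^ S k * (x - x'))
      by (simpl; ring).
    eapply Rle_trans. apply Rabs_triang. rewrite !Rabs_mult.
    rewrite (Rabs_pos_eq x) by lra. rewrite (Rabs_pos_eq (x' ^ S k)) by (apply pow_le; lra).
    assert (P1 : x' ^ S k <= r ^ S k) by (apply pow_incr; lra).
    assert (P2 : 0 <= Rabs (x - x')) by apply Rabs_pos.
    assert (P3 : 0 <= Rabs (x ^ S k - x' ^ S k)) by apply Rabs_pos.
    assert (P4 : x * Rabs (x ^ S k - x' ^ S k) <= r * (INR (S k) * r ^ k * Rabs (x - x'))).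
    { apply Rmult_le_compat; lra. }
    assert (P5 : x' ^ S k * Rabs (x - x') <= r ^ S k * Rabs (x - x')) by (apply Rmult_le_compat_r; lra).
    replace (INR (S (S k)) * r ^ S k * Rabs (x - x')) with
      (r * (INR (S k) * r ^ k * Rabs (x - x')) + r ^ S k * Rabs (x - x'))
      by (rewrite (S_INR (S k)); simpl; ring).
    lra.
Qed.

Definition Kc (r : R) := / (1 - r) * / (1 - r).

Lemma is_series_K r : 0 <= r < 1 -> is_series (fun n => INR (S n) * r ^ n) (Kc r).
Proof.
  intros Hr. assert (G := is_series_geom r ltac:(rewrite Rabs_pos_eq; lra)).
  assert (A : ex_series (fun n => Rabs (r ^ n))).
  { exists (/ (1 - r)). eapply is_series_ext; [|exact G]. intros n; simpl. rewrite Rabs_pos_eq; auto. apply pow_le; lra. }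
  assert (M := is_series_mult _ _ _ _ G G A A).
  eapply is_series_ext; [|exact M]. intros n. simpl.
  rewrite (sum_eq _ (fun _ => r ^ n)). rewrite sum_cte. rewrite <- (S_INR n). destruct n; simpl; ring.
  intros i Hi. rewrite <- pow_add. f_equal. lia.
Qed.

Lemma yv_lip x x' r u : 0 <= x <= r -> 0 <= x' <= r -> r < 1 ->
  Rabs (yv x u - yv x' u) <= Kc r * Rabs (x - x').
Proof.
  intros Hx Hx' Hr. unfold yv.
  set (b := fun n => match n with O => 0 | S k => INR (S k) * r ^ k * Rabs (x - x') end).
  assert (Hb : ex_series b).
  { apply ex_series_incr_1. exists (Kc r * Rabs (x - x')). unfold b.
    apply (is_series_scal_r (Rabs (x - x')) (fun n => INR (S n) * r ^ n)). apply is_series_K; lra. }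
  assert (Hab : forall n, Rabs (tm x u n - tm x' u n) <= b n).
  { intros [|k]; unfold tm, b; destruct (u _).
    - simpl. replace (1 - 1) with 0 by ring. rewrite Rabs_R0; lra.
    - replace (0 - 0) with 0 by ring. rewrite Rabs_R0; lra.
    - apply (pow_lip x x' r k); lra.
    - replace (0 - 0) with 0 by ring. rewrite Rabs_R0.
      apply Rmult_le_pos; [apply Rmult_le_pos; [apply pos_INR|apply pow_le; lra]|apply Rabs_pos]. }
  assert (Eabs : ex_series (fun n => Rabs (tm x u n - tm x' u n))).
  { apply (@ex_series_le R_AbsRing R_CompleteNormedModule _ b); auto.
    intros n. unfold norm; simpl; unfold abs; simpl. rewrite Rabs_Rabsolu. auto. }
  rewrite <- Series_minus by (apply ex_tm; lra).
  eapply Rle_trans. apply Series_Rabs. exact Eabs.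
  eapply Rle_trans. apply Series_le; [intros n; split; [apply Rabs_pos|apply Hab]|exact Hb].
  rewrite Series_incr_1 by exact Hb. unfold b at 1. rewrite Rplus_0_l.
  rewrite (Series_ext _ (fun n => INR (S n) * r ^ n * Rabs (x - x'))) by reflexivity.
  rewrite Series_scal_r. rewrite (is_series_unique _ _ (is_series_K r ltac:(lra))). lra.
Qed.

Lemma first_diff (s w : word) n : s n <> w n ->
  exists k, (forall i, (i < k)%nat -> s i = w i) /\ s k <> w k.
Proof.
  induction n as [n IH] using (well_founded_induction Wf_nat.lt_wf). intros Hn.
  destruct (classic (forall i, (i < n)%nat -> s i = w i)) as [H|H].
  - exists n; auto.
  - apply not_all_ex_not in H. destruct H as [i Hi].
    apply imply_to_and in Hi. destruct Hi as [Hi1 Hi2]. apply (IH i); auto.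
Qed.

Lemma lex_trich s w : weq s w \/ lex_lt s w \/ lex_lt w s.
Proof.
  destruct (classic (weq s w)) as [H|H]; [left; auto|right].
  unfold weq in H. apply not_all_ex_not in H. destruct H as [n Hn].
  destruct (first_diff s w n Hn) as [k [Hk1 Hk2]].
  destruct (s k) eqn:E1, (w k) eqn:E2; try congruence.
  - right. exists k. split; auto. intros i Hi; symmetry; auto.
  - left. exists k. auto.
Qed.

Lemma shift_shift n k (w : word) : shiftn n (shiftn k w) = shiftn (k + n) w.
Proof. apply functional_extensionality; intros j. unfold shiftn. f_equal. lia. Qed.

Lemma Omega_shift a b w k : Omega_ab a b w -> Omega_ab a b (shiftn k w).
Proof.
  intros [H|H]; [left|right]; intros n; rewrite shift_shift; apply H.
Qed.

Lemma adm_a a b : admissible a b -> Omega_ab a b a.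
Proof. intros (_&_&_&_&H&_). left. exact H. Qed.
Lemma adm_b a b : admissible a b -> Omega_ab a b b.
Proof. intros (_&_&_&_&_&H). right. exact H. Qed.

Lemma weq_sym s w : weq s w -> weq w s.
Proof. unfold weq; intros H k; auto. Qed.

Lemma classify0 a b s : admissible a b -> Omega_ab a b s -> s 0%nat = false -> lex_le s a.
Proof.
  intros (Ha0&Ha1&Hb0&Hb1&_) HO Hs.
  assert (L : lex_lt s b) by (exists 0%nat; split; [intros; lia|auto]).
  destruct HO as [H|H]; specialize (H 0%nat); unfold in_oc, in_co in H;
  destruct (lex_trich s a) as [T|[T|T]]; try (left; auto; fail); try (right; auto; fail).
  all: exfalso; apply H; split; solve [exact L | exact T | left; exact T | right; exact T | right; exact L | left; apply weq_sym; exact T].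
Qed.

Lemma classify1 a b s : admissible a b -> Omega_ab a b s -> s 0%nat = true -> lex_le b s.
Proof.
  intros (Ha0&Ha1&Hb0&Hb1&_) HO Hs.
  assert (L : lex_lt a s) by (exists 0%nat; split; [intros; lia|auto]).
  destruct HO as [H|H]; specialize (H 0%nat); unfold in_oc, in_co in H;
  destruct (lex_trich b s) as [T|[T|T]]; try (left; auto; fail); try (right; auto; fail).
  all: exfalso; apply H; split; solve [exact L | exact T | left; exact T | right; exact T | right; exact L | left; apply weq_sym; exact T].
Qed.

Lemma yv_weq x s w : weq s w -> yv x s = yv x w.
Proof. intros H. unfold yv, tm. apply Series_ext. intros n; rewrite H; auto. Qed.

Lemma shift0 (w : word) k : shiftn k w 0%nat = w k.
Proof. unfold shiftn. rewrite Nat.add_0_r. auto. Qed.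

Definition Dv a b x := yv x b - yv x a.

Definition good a b x := forall s, Omega_ab a b s ->
  (s 0%nat = false -> yv x s <= yv x a) /\ (s 0%nat = true -> yv x b <= yv x s).
Definition approx a b x e := forall s, Omega_ab a b s ->
  (s 0%nat = false -> yv x s <= yv x a + e) /\ (s 0%nat = true -> yv x b - e <= yv x s).

Lemma key a b x e : 0 <= x < 1 -> admissible a b -> approx a b x e -> 2 * e <= Dv a b x ->
  good a b x.
Proof.
  intros Hx Hadm Hap HD s Hs. unfold Dv in HD. split; intros H0.
  - destruct (classify0 a b s Hadm Hs H0) as [W|[k [Hk1 [Hk2 Hk3]]]].
    + rewrite (yv_weq x s a W). lra.
    + assert (E := yv_prefix x k Hx s a Hk1).
      assert (A1 := proj1 (Hap (shiftn k s) (Omega_shift _ _ _ k Hs)) ltac:(rewrite shift0; auto)).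
      assert (A2 := proj2 (Hap (shiftn k a) (Omega_shift _ _ _ k (adm_a _ _ Hadm))) ltac:(rewrite shift0; auto)).
      assert (P := pow_le x k (proj1 Hx)).
      assert (x ^ k * (yv x (shiftn k s) - yv x (shiftn k a)) <= 0).
      { apply Rmult_le_0_l; lra. }
      lra.
  - destruct (classify1 a b s Hadm Hs H0) as [W|[k [Hk1 [Hk2 Hk3]]]].
    + rewrite (yv_weq x b s W). lra.
    + assert (E := yv_prefix x k Hx b s Hk1).
      assert (A1 := proj1 (Hap (shiftn k b) (Omega_shift _ _ _ k (adm_b _ _ Hadm))) ltac:(rewrite shift0; auto)).
      assert (A2 := proj2 (Hap (shiftn k s) (Omega_shift _ _ _ k Hs)) ltac:(rewrite shift0; auto)).
      assert (P := pow_le x k (proj1 Hx)).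
      assert (x ^ k * (yv x (shiftn k b) - yv x (shiftn k s)) <= 0).
      { apply Rmult_le_0_l; lra. }
      lra.
Qed.

Lemma yv0 x u : 0 <= x < 1 -> u 0%nat = false -> yv x u <= x * / (1 - x).
Proof.
  intros Hx H. rewrite yv_step by auto. rewrite H.
  assert (B := yv_bounds x (shiftn 1 u) Hx).
  assert (x * yv x (shiftn 1 u) <= x * / (1 - x)) by (apply Rmult_le_compat_l; lra). lra.
Qed.

Lemma yv1 x u : 0 <= x < 1 -> u 0%nat = true -> 1 <= yv x u.
Proof.
  intros Hx H. rewrite yv_step by auto. rewrite H.
  assert (B := yv_bounds x (shiftn 1 u) Hx).
  assert (0 <= x * yv x (shiftn 1 u)) by (apply Rmult_le_pos; lra). lra.
Qed.

Lemma base a b x : 0 < x <= 1/4 -> admissible a b -> good a b x /\ 0 < Dv a b x.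
Proof.
  intros Hx Hadm. pose proof Hadm as (Ha0&Ha1&Hb0&Hb1&_).
  assert (Hx' : 0 <= x < 1) by lra.
  set (t := / (1 - x)).
  assert (Ht : t * (1 - x) = 1) by (unfold t; field; lra).
  assert (Ht2 : x * t = t - 1) by nra.
  assert (Ht3 : t <= 4/3) by nra.
  assert (Ht4 : 1 <= t) by nra.
  assert (Da := yv0 x a Hx' Ha0). assert (Db := yv1 x b Hx' Hb0).
  assert (Ba := yv_bounds x a Hx'). assert (Bb := yv_bounds x b Hx').
  fold t in Da, Ba, Bb. unfold Dv.
  split; [|lra].
  apply (key a b x (t - 1)); auto; [|unfold Dv; lra].
  intros s Hs. split; intros H0.
  - assert (S0 := yv0 x s Hx' H0). fold t in S0. lra.
  - assert (S1 := yv1 x s Hx' H0). lra.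
Qed.

Lemma mono a b x : 0 < x < 1 -> good a b x -> 0 < Dv a b x ->
  forall s w, Omega_ab a b s -> Omega_ab a b w -> lex_lt s w -> yv x s < yv x w.
Proof.
  intros Hx G HD s w Hs Hw [k [Hk1 [Hk2 Hk3]]].
  assert (Hx' : 0 <= x < 1) by lra.
  assert (E := yv_prefix x k Hx' w s ltac:(intros i Hi; symmetry; auto)).
  assert (A1 := proj1 (G (shiftn k s) (Omega_shift _ _ _ k Hs)) ltac:(rewrite shift0; auto)).
  assert (A2 := proj2 (G (shiftn k w) (Omega_shift _ _ _ k Hw)) ltac:(rewrite shift0; auto)).
  assert (P := pow_lt x k (proj1 Hx)). unfold Dv in HD.
  assert (0 < x ^ k * (yv x (shiftn k w) - yv x (shiftn k s))) by (apply Rmult_lt_0_compat; lra).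
  lra.
Qed.

Lemma absle z c : Rabs z <= c -> - c <= z <= c.
Proof. unfold Rabs; destruct Rcase_abs; lra. Qed.

Lemma Kc_pos r : r < 1 -> 0 < Kc r.
Proof. intros H. unfold Kc. assert (0 < / (1 - r)) by (apply Rinv_0_lt_compat; lra). nra. Qed.

Lemma step a b x x' r : 0 <= x <= r -> 0 <= x' <= r -> r < 1 -> admissible a b ->
  good a b x -> 4 * (Kc r * Rabs (x - x')) <= Dv a b x' -> good a b x'.
Proof.
  intros Hx Hx' Hr Hadm G HD.
  apply (key a b x' (2 * (Kc r * Rabs (x - x')))); [lra|auto| |lra].
  intros s Hs. pose proof (G s Hs) as [G0 G1].
  assert (Ls := absle _ _ (yv_lip x x' r s Hx Hx' Hr)).
  assert (La := absle _ _ (yv_lip x x' r a Hx Hx' Hr)).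
  assert (Lb := absle _ _ (yv_lip x x' r b Hx Hx' Hr)).
  split; intros H0; [specialize (G0 H0)|specialize (G1 H0)]; lra.
Qed.

Lemma Dv_lip a b x x' r : 0 <= x <= r -> 0 <= x' <= r -> r < 1 ->
  Rabs (Dv a b x - Dv a b x') <= 2 * (Kc r * Rabs (x - x')).
Proof.
  intros Hx Hx' Hr.
  assert (La := absle _ _ (yv_lip x x' r a Hx Hx' Hr)).
  assert (Lb := absle _ _ (yv_lip x x' r b Hx Hx' Hr)).
  unfold Dv. unfold Rabs at 1. destruct Rcase_abs; lra.
Qed.

Lemma archi (z : R) : exists n : nat, z < INR n.
Proof.
  destruct (archimed z) as [H1 _].
  destruct (Z.le_gt_cases 0 (up z)) as [Hz|Hz].
  - exists (Z.to_nat (up z)). rewrite INR_IZR_INZ. rewrite Z2Nat.id by lia. lra.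
  - exists 0%nat. simpl. apply IZR_lt in Hz. lra.
Qed.

Theorem lemma1 (a b : word) :
  admissible a b -> non_null a b ->
  ~ (exists x, 0 < x < 1 /\ proj x a = proj x b) ->
  forall x, 0 < x < 1 ->
  forall s w, Omega_ab a b s -> Omega_ab a b w ->
  lex_lt s w -> proj x s < proj x w.
Proof.
  intros Hadm _ Hno x0 Hx0 s w Hs Hw Hlt.
  assert (NZ : forall t, 0 < t < 1 -> Dv a b t <> 0).
  { intros t Ht HD. apply Hno. exists t. split; auto.
    change (proj t a) with ((1 - t) * yv t a). change (proj t b) with ((1 - t) * yv t b).
    unfold Dv in HD. replace (yv t b) with (yv t a) by lra. auto. }
  assert (GD : good a b x0 /\ 0 < Dv a b x0).
  { destruct (Rle_lt_dec x0 (1/4)) as [Hle|Hgt].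
    - apply base; auto; lra.
    - set (r := (1 + x0) / 2).
      assert (Hr : r < 1) by (unfold r; lra).
      assert (HL := Kc_pos r Hr). set (L := Kc r) in *.
      set (f := fun t => Rabs (Dv a b t)).
      assert (Cf : forall c, 1/4 <= c <= x0 -> continuity_pt f c).
      { intros c Hc. unfold continuity_pt, continue_in, limit1_in, limit_in. intros eps Heps.
        exists (Rmin (eps / (2 * L + 1)) (Rmin (1/8) ((1 - x0) / 2))).
        split. { apply Rmin_pos; [apply Rdiv_lt_0_compat; lra|apply Rmin_pos; lra]. }
        intros t [_ Ht]. simpl in *. unfold R_dist in *.
        assert (H1 := Rmin_l (eps / (2 * L + 1)) (Rmin (1/8) ((1 - x0) / 2))).
        assert (H2 := Rmin_r (eps / (2 * L + 1)) (Rmin (1/8) ((1 - x0) / 2))).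
        assert (H3 := Rmin_l (1/8) ((1 - x0) / 2)). assert (H4 := Rmin_r (1/8) ((1 - x0) / 2)).
        assert (Ht' := absle _ _ (Rlt_le _ _ Ht)).
        assert (Lp := Dv_lip a b t c r ltac:(unfold r; lra) ltac:(unfold r; lra) Hr).
        fold L in Lp. unfold f.
        eapply Rle_lt_trans. apply Rabs_triang_inv2.
        eapply Rle_lt_trans. exact Lp.
        assert (Rabs (t - c) * (2 * L + 1) < eps).
        { apply (Rmult_lt_reg_r (/ (2 * L + 1))). apply Rinv_0_lt_compat; lra.
          rewrite Rmult_assoc, Rinv_r by lra. rewrite Rmult_1_r. unfold Rdiv in H1. lra. }
        assert (0 <= Rabs (t - c)) by apply Rabs_pos. nra. }
      destruct (continuity_ab_min f (1/4) x0 ltac:(lra) Cf) as [mx [Hmin Hmx]].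
      set (m := f mx) in *.
      assert (Hm : 0 < m).
      { unfold m, f. apply Rabs_pos_lt. apply NZ. lra. }
      set (dl := m / (4 * L)).
      assert (Hdl : 0 < dl) by (unfold dl; apply Rdiv_lt_0_compat; lra).
      assert (Edl : 4 * L * dl = m) by (unfold dl; field; lra).
      assert (IND : forall n : nat, forall t, 1/4 <= t <= x0 -> t <= 1/4 + INR n * dl ->
                     good a b t /\ 0 < Dv a b t).
      { induction n as [|n IH]; intros t Ht Htn.
        - simpl in Htn. replace t with (1/4) by lra. apply base; auto; lra.
        - destruct (Rle_lt_dec t (1/4 + INR n * dl)) as [Hle|Hgt2]; [apply IH; auto|].
          rewrite S_INR in Htn.
          set (t' := Rmax (1/4) (t - dl)).
          assert (Ht'1 := Rmax_l (1/4) (t - dl)). assert (Ht'2 : t' <= t).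
          { unfold t'. apply Rmax_lub; lra. }
          assert (Ht'3 : t' <= 1/4 + INR n * dl).
          { unfold t'. apply Rmax_lub; [|lra]. assert (0 <= INR n) by apply pos_INR. nra. }
          assert (Ht'4 : t - t' <= dl) by (unfold t'; assert (H := Rmax_r (1/4) (t - dl)); lra).
          fold t' in Ht'1.
          destruct (IH t' ltac:(lra) Ht'3) as [G' D'].
          assert (Lp := Dv_lip a b t t' r ltac:(unfold r; lra) ltac:(unfold r; lra) Hr).
          fold L in Lp. rewrite (Rabs_pos_eq (t - t')) in Lp by lra. apply absle in Lp.
          assert (Lt : L * (t - t') <= L * dl) by (apply Rmult_le_compat_l; lra).
          assert (Fm : m <= f t) by (apply Hmin; lra).
          assert (Dpos : m <= Dv a b t).
          { unfold f in Fm. unfold Rabs in Fm. destruct Rcase_abs in Fm; lra. }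
          split; [|lra].
          apply (step a b t' t r); auto; try (unfold r; lra).
          fold L. rewrite Rabs_minus_sym, (Rabs_pos_eq (t - t')) by lra. lra. }
      destruct (archi (x0 / dl)) as [n Hn].
      apply (IND n); [lra|].
      assert (x0 / dl * dl = x0) by (field; lra).
      assert (x0 / dl * dl <= INR n * dl) by (apply Rmult_le_compat_r; lra). lra. }
  destruct GD as [G D].
  change (proj x0 s) with ((1 - x0) * yv x0 s). change (proj x0 w) with ((1 - x0) * yv x0 w).
  apply Rmult_lt_compat_l; [lra|].
  apply (mono a b x0); auto.
Qed.
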